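(* When $m=2$, the bound $R_{ach}(\mathbf{D})$ of the simultaneous-decoding achievability theorem satisfies $$R_{ach}(\mathbf{D})\le R^T(\mathbf{D})=\min\Big[\max_{i\in\{1,2\}}I(X;U_{\{1,2\}}|Y_i)+I(X;U_{\{1\}}|U_{\{1,2\}},Y_1)+I(X;U_{\{2\}}|U_{\{1,2\}},Y_2)\Big],$$ where the minimum is over joint distributions of $(U_{\{1,2\}},U_{\{1\}},U_{\{2\}},X,Y_1,Y_2)$ with finite-alphabet auxiliaries such that the marginal of $(X,Y_1,Y_2)$ is the given one, $(U_{\{1,2\}},U_{\{1\}},U_{\{2\}})\leftrightarrow X\leftrightarrow(Y_1,Y_2)$, and there exist functions $g_l$ with $E[d_l(X,g_l(U_{\{1,2\}},U_{\{l\}},Y_l))]\le D_l$ for $l=1,2$.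
   Context: Finite-alphabet setting: source $X$, side informations $Y_1,Y_2$ at two decoders, distortion measures $d_l$, constraints $D_l$. $R_{ach}(\mathbf{D})$ is the lower convex envelope in $\mathbf{D}$ of $R'_{ach}(\mathbf{D})=\min_v\inf_p\inf\sum_j R_{\mathcal{S}_j}$ where: $v=(\mathcal{S}_1,\mathcal{S}_2,\mathcal{S}_3)$ ranges over orderings of the nonempty subsets of $\{1,2\}$; $p$ ranges over joint distributions of finite-alphabet $(U_{\mathcal{S}_1},U_{\mathcal{S}_2},U_{\mathcal{S}_3})$ with $(X,Y_1,Y_2)$ having the given $(X,Y_1,Y_2)$-marginal, with $\mathcal{U}\leftrightarrow X\leftrightarrow(Y_1,Y_2)$ and functions $g_l(U_{\mathcal{D}_l},Y_l)$ meeting $E d_l\le D_l$; and the inner infimum is over nonnegative $R_{\mathcal{S}_j},R'_{\mathcal{S}_j}$ with $R_{\mathcal{S}_j}+R'_{\mathcal{S}_j}\ge I(X,U^-_{\mathcal{S}_j};U_{\mathcal{S}_j})$ and, for each $l$ and nonempty $\mathcal{D}'_l\subseteq\mathcal{D}_l$, $\sum_{\mathcal{S}_j\in\mathcal{D}'_l}R'_{\mathcal{S}_j}\le\sum_{\mathcal{S}_j\in\mathcal{D}'_l}H(U_{\mathcal{S}_j})-H(U_{\mathcal{D}'_l}|U_{\mathcal{D}_l\setminus\mathcal{D}'_l},Y_l)$. Here $\mathcal{D}_l=\{\mathcal{S}:l\in\mathcal{S}\}$, $U_{\mathcal{D}'}=\{U_\mathcal{S}:\mathcal{S}\in\mathcal{D}'\}$,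 $U^-_{\mathcal{S}_j}=\{U_{\mathcal{S}_i}:i<j\}$. *)

(* Defs.v *)
From mathcomp Require Import all_boot.
From Stdlib Require Import Reals.
Set Implicit Arguments. Unset Strict Implicit. Unset Printing Implicit Defensive.

Local Open Scope R_scope.

Definition rsum (T : finType) (F : T -> R) : R := \big[Rplus/R0]_(t : T) F t.
Definition rsum_in (T : finType) (A : {set T}) (F : T -> R) : R :=
  \big[Rplus/R0]_(t in A) F t.

Definition pmf (T : finType) (p : T -> R) : Prop :=
  (forall t, 0 <= p t) /\ rsum p = 1.

Definition distr (O A : finType) (p : O -> R) (f : O -> A) (a : A) : R :=
  rsum (fun w => if f w == a then p w else 0).

Definition pairv (O A B : Type) (f : O -> A) (g : O -> B) : O -> A * B :=
  fun w => (f w, g w).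

Definition xlnx (x : R) : R := if Rlt_dec 0 x then x * ln x else 0.

Definition entropy (O A : finType) (p : O -> R) (f : O -> A) : R :=
  - rsum (fun a => xlnx (distr p f a)).
Definition centropy (O A B : finType) (p : O -> R) (f : O -> A) (g : O -> B) : R :=
  entropy p (pairv f g) - entropy p g.
Definition mutinfo (O A B : finType) (p : O -> R) (f : O -> A) (g : O -> B) : R :=
  entropy p f - centropy p f g.
Definition cmutinfo (O A B C : finType) (p : O -> R)
  (f : O -> A) (g : O -> B) (h : O -> C) : R :=
  centropy p f h - centropy p f (pairv g h).
Definition expect (O : finType) (p : O -> R) (F : O -> R) : R :=
  rsum (fun w => p w * F w).
Definition markov (O A B C : finType) (p : O -> R)
  (f : O -> A) (g : O -> B) (h : O -> C) : Prop :=
  forall a b c, distr p (pairv (pairv f g) h) (a, b, c) * distr p g b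
              = distr p (pairv f g) (a, b) * distr p (pairv g h) (b, c).

Definition Omega (U1 U2 U12 TX TY1 TY2 : finType) : finType :=
  (U1 * U2 * U12 * (TX * TY1 * TY2))%type.

Section Proj.
Variables (U1 U2 U12 TX TY1 TY2 : finType).
Local Notation O := (Omega U1 U2 U12 TX TY1 TY2).
Definition pu1 (w : O) : U1 := w.1.1.1.
Definition pu2 (w : O) : U2 := w.1.1.2.
Definition pu12 (w : O) : U12 := w.1.2.
Definition px (w : O) : TX := w.2.1.1.
Definition py1 (w : O) : TY1 := w.2.1.2.
Definition py2 (w : O) : TY2 := w.2.2.
End Proj.

(* ---------- subsets of {1,2}: decoder 1 is ord0, decoder 2 is ord_max ---------- *)
Definition s1 : {set 'I_2} := [set ord0].
Definition s2 : {set 'I_2} := [set ord_max].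
Definition s12 : {set 'I_2} := [set: 'I_2].

Definition Dl (l : 'I_2) : {set {set 'I_2}} := [set S : {set 'I_2} | l \in S].

(* U_M = { U_S : S \in M } as one random variable (absent components are None) *)
Definition uvar (U1 U2 U12 TX TY1 TY2 : finType) (M : {set {set 'I_2}})
  (w : Omega U1 U2 U12 TX TY1 TY2) : option U1 * option U2 * option U12 :=
  (if s1 \in M then Some (pu1 w) else None,
   if s2 \in M then Some (pu2 w) else None,
   if s12 \in M then Some (pu12 w) else None).

Section Coding.
Variables (TX TY1 TY2 Xh1 Xh2 : finType).
Variable P : TX * TY1 * TY2 -> R.
Variable d1 : TX -> Xh1 -> R.
Variable d2 : TX -> Xh2 -> R.

Definition valid_joint (U1 U2 U12 : finType) (p : Omega U1 U2 U12 TX TY1 TY2 -> R) : Prop :=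
  pmf p /\
  (forall x y1 y2, distr p (fun w => (px w, py1 w, py2 w)) (x, y1, y2) = P (x, y1, y2)) /\
  markov p (fun w => (pu1 w, pu2 w, pu12 w)) (@px _ _ _ _ _ _) (fun w => (py1 w, py2 w)).

(* existence of g_l(U_{D_l}, Y_l) = g_l(U_{l}, U_{12}, Y_l) with E d_l <= D_l *)
Definition dist_ok (U1 U2 U12 : finType) (p : Omega U1 U2 U12 TX TY1 TY2 -> R)
  (D : R * R) : Prop :=
  exists (g1 : U1 -> U12 -> TY1 -> Xh1) (g2 : U2 -> U12 -> TY2 -> Xh2),
    expect p (fun w => d1 (px w) (g1 (pu1 w) (pu12 w) (py1 w))) <= D.1 /\
    expect p (fun w => d2 (px w) (g2 (pu2 w) (pu12 w) (py2 w))) <= D.2.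

(* U^-_S : the subsets preceding S in the ordering v *)
Definition prevset (v : seq {set 'I_2}) (S : {set 'I_2}) : {set {set 'I_2}} :=
  [set T | (T \in v) && ltn (index T v) (index S v)].

Definition dec_constr (U1 U2 U12 : finType) (p : Omega U1 U2 U12 TX TY1 TY2 -> R)
  (l : 'I_2) (Yl : finType) (yl : Omega U1 U2 U12 TX TY1 TY2 -> Yl)
  (Rp : {set 'I_2} -> R) : Prop :=
  forall Dp : {set {set 'I_2}}, Dp != set0 -> Dp \subset Dl l ->
    rsum_in Dp Rp <=
    rsum_in Dp (fun S => entropy p (uvar [set S]))
    - centropy p (uvar Dp) (pairv (uvar (Dl l :\: Dp)) yl).

Definition rate_constraints (U1 U2 U12 : finType) (p : Omega U1 U2 U12 TX TY1 TY2 -> R)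
  (v : seq {set 'I_2}) (Rr Rp : {set 'I_2} -> R) : Prop :=
  (forall S, S != set0 -> 0 <= Rr S /\ 0 <= Rp S) /\
  (forall S, S \in v ->
     mutinfo p (pairv (@px _ _ _ _ _ _) (uvar (prevset v S))) (uvar [set S]) <= Rr S + Rp S) /\
  dec_constr p ord0 (@py1 _ _ _ _ _ _) Rp /\
  dec_constr p ord_max (@py2 _ _ _ _ _ _) Rp.

(* r is one of the values over which R'_ach(D) is the infimum *)
Definition Rprime_val (D : R * R) (r : R) : Prop :=
  exists (U1 U2 U12 : finType) (p : Omega U1 U2 U12 TX TY1 TY2 -> R),
    valid_joint p /\ dist_ok p D /\
    exists (v : seq {set 'I_2}) (Rr Rp : {set 'I_2} -> R),
      perm_eq v [:: s1; s2; s12] /\ rate_constraints p v Rr Rp /\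
      r = Rr s1 + Rr s2 + Rr s12.

(* c = sum_k lam_k r_k with r_k a value for R'_ach(D_k) and sum_k lam_k D_k = D;
   R_ach(D) (lower convex envelope of R'_ach) is the infimum of such c *)
Definition Rach_combo (D : R * R) (c : R) : Prop :=
  exists (n : nat) (lam : 'I_n -> R) (Dk : 'I_n -> R * R) (rk : 'I_n -> R),
    (forall k, 0 <= lam k) /\ rsum lam = 1 /\
    rsum (fun k => lam k * (Dk k).1) = D.1 /\
    rsum (fun k => lam k * (Dk k).2) = D.2 /\
    (forall k, Rprime_val (Dk k) (rk k)) /\
    c = rsum (fun k => lam k * rk k).

Definition Rach_le (D : R * R) (t : R) : Prop :=
  forall eps, 0 < eps -> exists c, Rach_combo D c /\ c <= t + eps.

(* t is one of the values over which R^T(D) is the minimum *)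
Definition RT_val (D : R * R) (t : R) : Prop :=
  exists (U1 U2 U12 : finType) (p : Omega U1 U2 U12 TX TY1 TY2 -> R),
    valid_joint p /\ dist_ok p D /\
    t = Rmax (cmutinfo p (@px _ _ _ _ _ _) (@pu12 _ _ _ _ _ _) (@py1 _ _ _ _ _ _))
             (cmutinfo p (@px _ _ _ _ _ _) (@pu12 _ _ _ _ _ _) (@py2 _ _ _ _ _ _))
        + cmutinfo p (@px _ _ _ _ _ _) (@pu1 _ _ _ _ _ _)
                   (pairv (@pu12 _ _ _ _ _ _) (@py1 _ _ _ _ _ _))
        + cmutinfo p (@px _ _ _ _ _ _) (@pu2 _ _ _ _ _ _)
                   (pairv (@pu12 _ _ _ _ _ _) (@py2 _ _ _ _ _ _)).
End Coding.

(* Main.v *)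
From HB Require Import structures.
Require Import Defs.
From mathcomp Require Import all_boot.
From Stdlib Require Import Reals Lra.
Set Implicit Arguments. Unset Strict Implicit. Unset Printing Implicit Defensive.

Local Open Scope R_scope.

Lemma RpA : associative Rplus. Proof. move=> *; ring. Qed.
Lemma RpC : commutative Rplus. Proof. move=> *; ring. Qed.
Lemma Rp0 : left_id R0 Rplus. Proof. move=> *; ring. Qed.
Lemma RmA : associative Rmult. Proof. move=> *; ring. Qed.
Lemma RmC : commutative Rmult. Proof. move=> *; ring. Qed.
Lemma Rm1 : left_id R1 Rmult. Proof. move=> *; ring. Qed.
HB.instance Definition _ := Monoid.isComLaw.Build R R0 Rplus RpA RpC Rp0.
HB.instance Definition _ := Monoid.isComLaw.Build R R1 Rmult RmA RmC Rm1.
Lemma Rmult_0_l' : left_zero R0 Rmult. Proof. move=> x; ring. Qed.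
Lemma Rmult_0_r' : right_zero R0 Rmult. Proof. move=> x; ring. Qed.
HB.instance Definition _ := Monoid.isMulLaw.Build R R0 Rmult Rmult_0_l' Rmult_0_r'.
Lemma RmDl : left_distributive Rmult Rplus. Proof. move=> x y z; ring. Qed.
Lemma RmDr : right_distributive Rmult Rplus. Proof. move=> x y z; ring. Qed.
HB.instance Definition _ := Monoid.isAddLaw.Build R Rmult Rplus RmDl RmDr.


Definition L (x : R) : R := if Rlt_dec 0 x then ln x else 0.
Lemma xlnxE x : xlnx x = x * L x.
Proof. rewrite /xlnx /L; destruct (Rlt_dec 0 x); simpl; ring. Qed.

Lemma ln_le_m1 x : 0 < x -> ln x <= x - 1.
Proof. move=> hx; have := exp_ineq1_le (ln x); rewrite exp_ln //; lra. Qed.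

Lemma sum_pick (A : finType) (a0 : A) (F : A -> R) :
  \big[Rplus/0]_a (if a0 == a then F a else 0) = F a0.
Proof.
rewrite -big_mkcond /= (big_pred1 a0) //.
Qed.

Lemma sum_pick' (A : finType) (a0 : A) (F : A -> R) :
  \big[Rplus/0]_a (if a == a0 then F a else 0) = F a0.
Proof. rewrite -[RHS](sum_pick a0); apply: eq_bigr => a _; by rewrite eq_sym. Qed.

Lemma rsum_ge0 (T : finType) (F : T -> R) : (forall t, 0 <= F t) -> 0 <= rsum F.
Proof. move=> h; rewrite /rsum; apply: (big_ind (fun x => 0 <= x)) => //; [lra| move=> *; lra]. Qed.

Lemma rsum_le (T : finType) (F G : T -> R) : (forall t, F t <= G t) -> rsum F <= rsum G.
Proof. move=> h; rewrite /rsum; apply: (big_ind2 (fun x y => x <= y)) => //; [lra| move=> *; lra]. Qed.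

Section Gen.
Variables (O : finType) (p : O -> R).

Lemma CoV (A : finType) (f : O -> A) (G : A -> R) :
  rsum (fun a => distr p f a * G a) = rsum (fun w => p w * G (f w)).
Proof.
rewrite /rsum /distr.
under eq_bigr => a _ do rewrite /rsum big_distrl /=.
rewrite exchange_big /=; apply: eq_bigr => w _.
rewrite -(sum_pick (f w) (fun a => p w * G a)); apply: eq_bigr => a _.
by case: eqP => _ //=; ring.
Qed.

Lemma entropyE (A : finType) (f : O -> A) :
  entropy p f = - rsum (fun w => p w * L (distr p f (f w))).
Proof.
rewrite /entropy -(CoV f (fun a => L (distr p f a))); congr (- _).
by apply: eq_bigr => a _; rewrite xlnxE.
Qed.

Lemma Inv (A B : finType) (f : O -> A) (g : O -> B) :
  (forall w w', (f w == f w') = (g w == g w')) -> entropy p f = entropy p g.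
Proof.
move=> H; rewrite !entropyE; congr (- _); apply: eq_bigr => w _.
congr (_ * L _); rewrite /distr /rsum; apply: eq_bigr => w' _; by rewrite H.
Qed.

Lemma distr_comp (Z Y : finType) (F : O -> Z) (k : Z -> Y) y :
  distr p (fun w => k (F w)) y = rsum (fun z => if k z == y then distr p F z else 0).
Proof.
rewrite /distr /rsum.
have -> : \big[Rplus/0]_z (if k z == y then \big[Rplus/0]_(w : O) (if F w == z then p w else 0) else 0)
   = \big[Rplus/0]_z \big[Rplus/0]_(w : O) (if k z == y then (if F w == z then p w else 0) else 0).
  apply: eq_bigr => z _; case: (k z == y) => //; by rewrite big1.
rewrite exchange_big /=; apply: eq_bigr => w _.
rewrite -(sum_pick (F w) (fun z => if k z == y then p w else 0)) /=.
apply: eq_bigr => z _; by case: (k z == y); case: (F w == z).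
Qed.

Lemma marg (B Z Y : finType) (F : O -> Z) (g : O -> B) (e : B -> Z) (G : O -> Y) (y : Y) :
  (forall w b, (F w == e b) = (G w == y) && (g w == b)) ->
  rsum (fun b => distr p F (e b)) = distr p G y.
Proof.
move=> H; rewrite /distr /rsum exchange_big /=; apply: eq_bigr => w _.
under eq_bigr => b _ do rewrite H.
case: (G w == y) => /=; first by rewrite (sum_pick (g w) (fun _ => p w)).
by rewrite big1.
Qed.

Hypothesis p0 : forall w, 0 <= p w.

Lemma distr_ge0 (A : finType) (f : O -> A) a : 0 <= distr p f a.
Proof. apply: rsum_ge0 => w; case: (_ == _); [exact: p0 | lra]. Qed.

Lemma distr_pt (A : finType) (f : O -> A) w : p w <= distr p f (f w).
Proof.
rewrite /distr /rsum (bigD1 w) //= eqxx.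
have : 0 <= \big[Rplus/R0]_(i | i != w) (if f i == f w then p i else 0).
  apply: (big_ind (fun x => 0 <= x)) => //; [lra | move=> *; lra | move=> i _; case: (_ == _); [exact: p0 | lra]].
lra.
Qed.

Lemma distr_mono (A B : finType) (f : O -> A) (g : O -> B) a b :
  (forall w, f w == a -> g w == b) -> distr p f a <= distr p g b.
Proof.
move=> H; apply: rsum_le => w; case E: (f w == a); first by rewrite (H w E); lra.
case: (_ == _); [exact: p0 | lra].
Qed.

Lemma rsum_distr (A : finType) (f : O -> A) : rsum (distr p f) = rsum p.
Proof. have := CoV f (fun _ => 1). rewrite /rsum; under eq_bigr do rewrite Rmult_1_r.
by move=> ->; apply: eq_bigr => *; ring. Qed.

End Gen.

Local Open Scope R_scope.

Section Gen2.
Variables (O : finType) (p : O -> R).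
Hypothesis p0 : forall w, 0 <= p w.

Lemma rsum_split (T : finType) (F G : T -> R) : rsum (fun t => F t + G t) = rsum F + rsum G.
Proof. by rewrite /rsum big_split. Qed.
Lemma rsum_opp (T : finType) (F : T -> R) : rsum (fun t => - F t) = - rsum F.
Proof.
rewrite /rsum; apply: (big_ind2 (fun x y => x = - y)) => //; first by rewrite Ropp_0.
by move=> x1 x2 y1 y2 -> ->; ring.
Qed.
Lemma rsum_scal (T : finType) (F : T -> R) c : rsum (fun t => c * F t) = c * rsum F.
Proof. by rewrite /rsum big_distrr. Qed.

Lemma pos_of_pt (A : finType) (f : O -> A) w : 0 < p w -> 0 < distr p f (f w).
Proof. move=> h; have := distr_pt p0 f w; lra. Qed.

Lemma L_pos x : 0 < x -> L x = ln x.
Proof. rewrite /L; by case: Rlt_dec. Qed.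

Lemma if_pos (x a : R) : 0 < x -> (if Rlt_dec 0 x then a else 0) = a.
Proof. by case: Rlt_dec. Qed.
Lemma if_npos (x a : R) : ~ 0 < x -> (if Rlt_dec 0 x then a else 0) = 0.
Proof. by case: Rlt_dec. Qed.

Lemma markov_eq (A B C : finType) (f : O -> A) (g : O -> B) (h : O -> C) :
  markov p f g h ->
  entropy p (pairv (pairv f g) h) + entropy p g = entropy p (pairv f g) + entropy p (pairv g h).
Proof.
move=> M; rewrite !entropyE -!Ropp_plus_distr -!rsum_split; congr (- _).
apply: eq_bigr => w _; case: (Rle_lt_or_eq_dec _ _ (p0 w)) => hw; last by rewrite -hw; ring.
have h1 := pos_of_pt (pairv (pairv f g) h) hw.
have h2 := pos_of_pt g hw.
have h3 := pos_of_pt (pairv f g) hw.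
have h4 := pos_of_pt (pairv g h) hw.
rewrite /pairv /= in h1 h3 h4 *.
rewrite !L_pos //.
have e := M (f w) (g w) (h w).
rewrite -!Rmult_plus_distr_l -!ln_mult // e //.
Qed.


Lemma rsum_pair (A B : finType) (F : A * B -> R) :
  rsum F = rsum (fun a => rsum (fun b => F (a, b))).
Proof. rewrite /rsum pair_bigA; by apply: eq_bigr => -[a b]. Qed.

Lemma rsum_exch (A B : finType) (F : A -> B -> R) :
  rsum (fun a => rsum (fun b => F a b)) = rsum (fun b => rsum (fun a => F a b)).
Proof. by rewrite /rsum exchange_big. Qed.

Lemma rsum_ext (T : finType) (F G : T -> R) : (forall t, F t = G t) -> rsum F = rsum G.
Proof. by move=> h; apply: eq_bigr => t _. Qed.

Lemma marg_l (A C : finType) (f : O -> A) (h : O -> C) c :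
  rsum (fun a => distr p (pairv f h) (a, c)) = distr p h c.
Proof. apply: (@marg O p _ _ _ (pairv f h) f (fun a => (a, c)) h c) => w a; by rewrite /pairv xpair_eqE andbC. Qed.

Lemma marg_r (A C : finType) (f : O -> A) (h : O -> C) a :
  rsum (fun c => distr p (pairv f h) (a, c)) = distr p f a.
Proof. apply: (@marg O p _ _ _ (pairv f h) h (fun c => (a, c)) f a) => w c; by rewrite /pairv xpair_eqE. Qed.

Hypothesis p1 : rsum p = 1.

Lemma cmi_ge0 (A B C : finType) (f : O -> A) (g : O -> B) (h : O -> C) :
  entropy p (pairv (pairv f g) h) + entropy p h <= entropy p (pairv f h) + entropy p (pairv g h).
Proof.
set D3 := distr p (pairv (pairv f g) h).
set Dh := distr p h.
set Dfh := distr p (pairv f h).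
set Dgh := distr p (pairv g h).
pose G (z : (A * B) * C) := if Rlt_dec 0 (D3 z) then Dfh (z.1.1, z.2) * Dgh (z.1.2, z.2) / (D3 z * Dh z.2) else 0.
pose Hf (z : (A * B) * C) := if Rlt_dec 0 (Dh z.2) then Dfh (z.1.1, z.2) * Dgh (z.1.2, z.2) / Dh z.2 else 0.
have step1 : rsum (fun w => p w * (L (distr p (pairv f h) (pairv f h w)) + L (distr p (pairv g h) (pairv g h w))
        - L (distr p (pairv (pairv f g) h) (pairv (pairv f g) h w)) - L (distr p h (h w))))
   <= rsum (fun w => p w * G (pairv (pairv f g) h w) - p w).
  apply: rsum_le => w.
  change (p w * (L (Dfh (f w, h w)) + L (Dgh (g w, h w)) - L (D3 ((f w, g w), h w)) - L (Dh (h w)))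
     <= p w * G ((f w, g w), h w) - p w).
  case: (Rle_lt_or_eq_dec _ _ (p0 w)) => hw; last by rewrite -hw; lra.
  have h1 : 0 < D3 ((f w, g w), h w) := pos_of_pt (pairv (pairv f g) h) hw.
  have h2 : 0 < Dh (h w) := pos_of_pt h hw.
  have h3 : 0 < Dfh (f w, h w) := pos_of_pt (pairv f h) hw.
  have h4 : 0 < Dgh (g w, h w) := pos_of_pt (pairv g h) hw.
  rewrite /G /pairv /=; destruct (Rlt_dec 0 (D3 ((f w, g w), h w))) as [rr|nn]; last lra; simpl.
  rewrite !L_pos //.
  set a := D3 _ in h1 *; set b := Dh _ in h2 *; set c := Dfh _ in h3 *; set d := Dgh _ in h4 *.
  have hab : 0 < a * b by apply: Rmult_lt_0_compat.
  have hcd : 0 < c * d by apply: Rmult_lt_0_compat.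
  have hx := Rdiv_lt_0_compat _ _ hcd hab.
  have := ln_le_m1 hx.
  rewrite /Rdiv ln_mult //; last by apply: Rinv_0_lt_compat; apply: Rmult_lt_0_compat.
  rewrite ln_mult // ln_Rinv; last by apply: Rmult_lt_0_compat.
  rewrite ln_mult // => hh.
  have := Rmult_le_compat_l (p w) _ _ (Rlt_le _ _ hw) hh. lra.
have step2 : rsum (fun w => p w * G (pairv (pairv f g) h w)) <= 1.
  rewrite -(CoV p (pairv (pairv f g) h) G) -/D3.
  apply: (Rle_trans _ (rsum Hf)).
    apply: rsum_le => -[[a b] c]; rewrite /G /Hf /D3 /Dh /Dfh /Dgh /=.
    have hz : distr p (pairv (pairv f g) h) ((a, b), c) <= distr p h c.
      apply: distr_mono => // w; rewrite /pairv !xpair_eqE.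
      by move=> /andP [] _.
    have hDfh : 0 <= distr p (pairv f h) (a, c) by apply: distr_ge0.
    have hDgh : 0 <= distr p (pairv g h) (b, c) by apply: distr_ge0.
    have hDh := distr_ge0 p0 h c.
    case: (Rlt_le_dec 0 (distr p (pairv (pairv f g) h) ((a, b), c))) => h3.
      have h4 : 0 < distr p h c by lra.
      rewrite !if_pos //.
      apply: Req_le; field; split; lra.
    rewrite if_npos; last lra.
    rewrite Rmult_0_r; case: (Rlt_le_dec 0 (distr p h c)) => h4.
      rewrite if_pos //; apply: Rmult_le_pos; first by apply: Rmult_le_pos.
      by apply: Rlt_le; apply: Rinv_0_lt_compat.
    rewrite if_npos; lra.
  rewrite rsum_pair rsum_exch.
  apply: Req_le; rewrite -p1 -(rsum_distr p h); apply: rsum_ext => c.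
  rewrite rsum_pair /Hf /Dh /Dfh /Dgh /=.
  have hDc := distr_ge0 p0 h c.
  case: (Rlt_le_dec 0 (distr p h c)) => hc; last first.
    have hc' : ~ 0 < distr p h c by lra.
    rewrite /rsum big1 //=; first lra.
    by move=> i _; rewrite big1 // => j _; rewrite (if_npos _ hc').
  rewrite /rsum; under eq_bigr => a _ do under eq_bigr => b _ do rewrite (if_pos _ hc).
  rewrite -/(rsum _).
  have -> : rsum (fun a => rsum (fun b => distr p (pairv f h) (a, c) * distr p (pairv g h) (b, c) / distr p h c))
     = rsum (fun a => distr p (pairv f h) (a, c)) * rsum (fun b => distr p (pairv g h) (b, c)) / distr p h c.
    rewrite /Rdiv Rmult_assoc Rmult_comm -rsum_scal; apply: rsum_ext => a.
    transitivity ((distr p (pairv f h) (a, c) * / distr p h c) * rsum (fun b => distr p (pairv g h) (b, c))).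
      rewrite -rsum_scal; apply: rsum_ext => b; ring.
    ring.
  rewrite !marg_l; field; lra.
have e1 : entropy p (pairv f h) + entropy p (pairv g h) - (entropy p (pairv (pairv f g) h) + entropy p h)
  = - rsum (fun w => p w * (L (distr p (pairv f h) (pairv f h w)) + L (distr p (pairv g h) (pairv g h w))
        - L (distr p (pairv (pairv f g) h) (pairv (pairv f g) h w)) - L (distr p h (h w)))).
  rewrite !entropyE.
  set F1 := (fun w => p w * L (distr p (pairv f h) (pairv f h w))).
  set F2 := (fun w => p w * L (distr p (pairv g h) (pairv g h w))).
  set F3 := (fun w => p w * L (distr p (pairv (pairv f g) h) (pairv (pairv f g) h w))).
  set F4 := (fun w => p w * L (distr p h (h w))).
  have -> : rsum (fun w => p w * (L (distr p (pairv f h) (pairv f h w)) + L (distr p (pairv g h) (pairv g h w))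
        - L (distr p (pairv (pairv f g) h) (pairv (pairv f g) h w)) - L (distr p h (h w))))
     = rsum F1 + rsum F2 + (- rsum F3) + (- rsum F4).
    rewrite -!rsum_opp -!rsum_split; apply: rsum_ext => w; rewrite /F1 /F2 /F3 /F4; ring.
  ring.
have e2 : rsum (fun w => p w * G (pairv (pairv f g) h w) - p w) = rsum (fun w => p w * G (pairv (pairv f g) h w)) - 1.
  rewrite -p1 /Rminus -rsum_opp -rsum_split //.
lra.
Qed.

Lemma margP (B Z Y : finType) (F : O -> Z) (g : O -> B) (e : B -> Z) (P : pred B) (G : O -> Y) (y : Y) :
  (forall w b, P b && (F w == e b) = (G w == y) && (g w == b)) ->
  rsum (fun b => if P b then distr p F (e b) else 0) = distr p G y.
Proof.
move=> H.
have -> : rsum (fun b => if P b then distr p F (e b) else 0) =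
          rsum (fun b => rsum (fun w => if P b && (F w == e b) then p w else 0)).
  apply: rsum_ext => b; case: (P b) => //=; by rewrite /rsum big1.
rewrite rsum_exch /distr; apply: rsum_ext => w.
rewrite /rsum; under eq_bigr => b _ do rewrite H.
case: (G w == y) => /=; first by rewrite (sum_pick (g w) (fun _ => p w)).
by rewrite big1.
Qed.

Lemma markov_comp (A B C A' C' : finType) (f : O -> A) (g : O -> B) (h : O -> C)
  (k1 : A -> A') (k2 : C -> C') :
  markov p f g h -> markov p (fun w => k1 (f w)) g (fun w => k2 (h w)).
Proof.
move=> M a' b c'.
have E3 : rsum (fun ac : A * C => if (k1 ac.1 == a') && (k2 ac.2 == c')
              then distr p (pairv (pairv f g) h) ((ac.1, b), ac.2) else 0)
        = distr p (pairv (pairv (fun w => k1 (f w)) g) (fun w => k2 (h w))) ((a', b), c').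
  apply: (@margP _ _ _ (pairv (pairv f g) h) (pairv f h) (fun ac => ((ac.1, b), ac.2))
           (fun ac => (k1 ac.1 == a') && (k2 ac.2 == c'))) => w [a c] /=.
  rewrite /pairv !xpair_eqE /=.
  case: (f w =P a) => [<-|_]; last by rewrite !andbF.
  case: (h w =P c) => [<-|_]; last by rewrite !andbF.
  by rewrite ?eqxx ?andbT; case: (k1 (f w) == a'); case: (g w == b); case: (k2 (h w) == c').
have E1 : rsum (fun a => if k1 a == a' then distr p (pairv f g) (a, b) else 0)
        = distr p (pairv (fun w => k1 (f w)) g) (a', b).
  apply: (@margP _ _ _ (pairv f g) f (fun a => (a, b)) (fun a => k1 a == a')) => w a /=.
  rewrite /pairv !xpair_eqE /=.
  case: (f w =P a) => [<-|_]; last by rewrite !andbF.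
  by rewrite ?eqxx ?andbT; case: (k1 (f w) == a'); case: (g w == b).
have E2 : rsum (fun c => if k2 c == c' then distr p (pairv g h) (b, c) else 0)
        = distr p (pairv g (fun w => k2 (h w))) (b, c').
  apply: (@margP _ _ _ (pairv g h) h (fun c => (b, c)) (fun c => k2 c == c')) => w c /=.
  rewrite /pairv !xpair_eqE /=.
  case: (h w =P c) => [<-|_]; last by rewrite !andbF.
  by rewrite ?eqxx ?andbT; case: (k2 (h w) == c'); case: (g w == b).
rewrite -E3 -E1 -E2 rsum_pair.
rewrite Rmult_comm -rsum_scal.
have -> : rsum (fun a => if k1 a == a' then distr p (pairv f g) (a, b) else 0) *
          rsum (fun c => if k2 c == c' then distr p (pairv g h) (b, c) else 0)
        = rsum (fun a => rsum (fun c => (if k1 a == a' then distr p (pairv f g) (a, b) else 0) *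
                                        (if k2 c == c' then distr p (pairv g h) (b, c) else 0))).
  rewrite /rsum big_distrl /=; apply: eq_bigr => a _; by rewrite big_distrr.
apply: rsum_ext => a; rewrite -rsum_scal; apply: rsum_ext => c /=.
case: (k1 a == a'); case: (k2 c == c') => /=; try ring.
by rewrite Rmult_comm M.
Qed.

End Gen2.

Local Open Scope R_scope.

Section Gen3.
Variables (O : finType) (p : O -> R).
Hypothesis p0 : forall w, 0 <= p w.
Hypothesis p1 : rsum p = 1.

Lemma entropy_const (T : finType) (t : T) : entropy p (fun _ => t) = 0.
Proof.
rewrite entropyE.
have -> : distr p (fun _ => t) t = 1 by rewrite /distr -p1; apply: rsum_ext => w; rewrite eqxx.
have L1 : L 1 = 0 by rewrite /L; destruct (Rlt_dec 0 1); simpl; [exact: ln_1 | done].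
rewrite L1 (rsum_ext (G := fun w => 0 * p w)); last by move=> w; ring.
rewrite rsum_scal; ring.
Qed.

Lemma mi_ge0 (A B : finType) (f : O -> A) (g : O -> B) :
  entropy p (pairv f g) <= entropy p f + entropy p g.
Proof.
have := cmi_ge0 p0 p1 f g (fun _ => tt).
rewrite entropy_const.
rewrite (@Inv O p _ _ (pairv (pairv f g) (fun _ => tt)) (pairv f g)); last by move=> w w'; rewrite /pairv !xpair_eqE !andbT.
rewrite (@Inv O p _ _ (pairv f (fun _ => tt)) f); last by move=> w w'; rewrite /pairv !xpair_eqE !andbT.
rewrite (@Inv O p _ _ (pairv g (fun _ => tt)) g); last by move=> w w'; rewrite /pairv !xpair_eqE !andbT.
lra.
Qed.
End Gen3.

Section Sel.
Variables (U1 U2 U12 TX TY1 TY2 : finType).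
Local Notation O := (Omega U1 U2 U12 TX TY1 TY2).
Definition sel (m : bool * bool * bool * bool * bool * bool) (w : O) :=
  let: (mA, mB, mC, mX, m1, m2) := m in
  (if mA then Some (pu12 w) else None, if mB then Some (pu1 w) else None,
   if mC then Some (pu2 w) else None, if mX then Some (px w) else None,
   if m1 then Some (py1 w) else None, if m2 then Some (py2 w) else None).
Definition orm (m1 m2 : bool * bool * bool * bool * bool * bool) :=
  let: (a1, b1, c1, x1, u1, v1) := m1 in let: (a2, b2, c2, x2, u2, v2) := m2 in
  (a1 || a2, b1 || b2, c1 || c2, x1 || x2, u1 || u2, v1 || v2).
End Sel.

Lemma some_eq (T : eqType) (x y : T) : (Some x == Some y) = (x == y).
Proof. by []. Qed.

Lemma none_eq (T : eqType) : (@None T == None) = true.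
Proof. by []. Qed.

Ltac bcase := repeat match goal with |- context [?x == ?y] => case: (x == y) end.
Ltac inv_tac := move=> w w'; rewrite /sel /pairv /= ?xpair_eqE ?some_eq ?none_eq ?andbT ?andTb /=; bcase; done.


Local Open Scope R_scope.

Definition invg (x : R) := if Rlt_dec 0 x then / x else 0.
Lemma invg_ge0 x : 0 <= invg x.
Proof. rewrite /invg; destruct (Rlt_dec 0 x); simpl; [by apply: Rlt_le; apply: Rinv_0_lt_compat | lra]. Qed.

Section Constr.
Variables (U1 U2 U12 TX TY1 TY2 : finType).
Local Notation O := (Omega U1 U2 U12 TX TY1 TY2).
Variable p : O -> R.
Hypotheses (p0 : forall w, 0 <= p w) (p1 : rsum p = 1).

Definition AX (w : O) := (pu12 w, px w).
Definition ACX (w : O) := ((pu12 w, pu2 w), px w).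
Definition glue (w1 w2 : O) : O := (((pu1 w1, pu2 w2), pu12 w1), ((px w1, py1 w1), py2 w1)).
Definition nu (w1 w2 : O) := p w1 * (if AX w2 == AX w1 then p w2 else 0) * invg (distr p AX (AX w1)).
Definition pp (w : O) := rsum (fun w1 => rsum (fun w2 => if glue w1 w2 == w then nu w1 w2 else 0)).

Lemma nu_ge0 w1 w2 : 0 <= nu w1 w2.
Proof.
rewrite /nu; apply: Rmult_le_pos; last exact: invg_ge0.
apply: Rmult_le_pos => //; case: (_ == _) => //; lra.
Qed.

Lemma pp_ge0 w : 0 <= pp w.
Proof.
apply: rsum_ge0 => w1; apply: rsum_ge0 => w2; case: (_ == _); [exact: nu_ge0 | lra].
Qed.

Lemma push (Z : finType) (F : O -> Z) z :
  distr pp F z = rsum (fun w1 => rsum (fun w2 => if F (glue w1 w2) == z then nu w1 w2 else 0)).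
Proof.
rewrite /distr /pp.
transitivity (rsum (fun w => rsum (fun w1 => rsum (fun w2 =>
   if F w == z then (if glue w1 w2 == w then nu w1 w2 else 0) else 0)))).
  apply: rsum_ext => w; case: (F w == z) => //.
  by rewrite /rsum big1 // => w1 _; rewrite big1.
rewrite rsum_exch; apply: rsum_ext => w1; rewrite rsum_exch; apply: rsum_ext => w2.
rewrite /rsum -(sum_pick (glue w1 w2) (fun w => if F w == z then nu w1 w2 else 0)).
apply: eq_bigr => w _; by case: (F w == z); case: (glue w1 w2 == w).
Qed.

Lemma s_pt w1 : p w1 * invg (distr p AX (AX w1)) * distr p AX (AX w1) = p w1.
Proof.
have h := distr_pt p0 AX w1.
rewrite /invg; destruct (Rlt_dec 0 (distr p AX (AX w1))) as [hs|hs]; simpl.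
  field; lra.
have : p w1 = 0 by have := p0 w1; lra.
move=> ->; ring.
Qed.

Lemma lift1 (Z Z1 : finType) (F : O -> Z) (F1 : O -> Z1) z z1 :
  (forall w1 w2, (F (glue w1 w2) == z) = (F1 w1 == z1)) -> distr pp F z = distr p F1 z1.
Proof.
move=> H; rewrite push /distr; apply: rsum_ext => w1.
rewrite /rsum; under eq_bigr => w2 _ do rewrite H.
case: (F1 w1 == z1); last by rewrite big1.
rewrite -[RHS](s_pt w1) /nu.
under eq_bigr => w2 _ do rewrite (Rmult_comm (p w1)) Rmult_assoc.
rewrite -big_distrl /= Rmult_comm; congr (_ * _); rewrite -/(rsum _); ring_simplify.
Qed.

Lemma lift2 (Z Z1 : finType) (F : O -> Z) (F1 : O -> Z1) z z1 a c x :
  (forall w1 w2, (F (glue w1 w2) == z) = (F1 w1 == z1) && (pu2 w2 == c)) ->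
  (forall w1, F1 w1 == z1 -> AX w1 = (a, x)) ->
  distr pp F z = distr p F1 z1 * (distr p ACX ((a, c), x) * invg (distr p AX (a, x))).
Proof.
move=> H H2; rewrite push /distr Rmult_comm -rsum_scal; apply: rsum_ext => w1.
rewrite /rsum; under eq_bigr => w2 _ do rewrite H.
case E: (F1 w1 == z1) => /=; last by rewrite big1 //; ring.
rewrite /nu (H2 w1 E).
transitivity (\big[Rplus/R0]_w2 ((p w1 * invg (distr p AX (a, x))) * (if ACX w2 == ((a, c), x) then p w2 else 0))).
  apply: eq_bigr => w2 _; rewrite /ACX /AX !xpair_eqE.
  case: (pu2 w2 == c); case: (pu12 w2 == a); case: (px w2 == x) => /=; ring.
rewrite -big_distrr /= -/(rsum _) -/(distr p ACX ((a, c), x)). rewrite -/(rsum _) -/(distr p AX (a, x)); ring.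
Qed.

End Constr.

Local Open Scope R_scope.

Section Facts.
Variables (U1 U2 U12 TX TY1 TY2 : finType).
Local Notation O := (Omega U1 U2 U12 TX TY1 TY2).
Variable p : O -> R.
Hypotheses (p0 : forall w, 0 <= p w) (p1 : rsum p = 1).
Hypothesis pm : markov p (fun w => (pu1 w, pu2 w, pu12 w)) (@px _ _ _ _ _ _) (fun w => (py1 w, py2 w)).

Definition phi1 (w : O) := (((pu12 w, pu1 w), px w), py1 w).
Definition phi2 (w : O) := (((pu12 w, pu2 w), px w), py2 w).

Lemma pp_sum1 : rsum (pp p) = 1.
Proof.
transitivity (distr (pp p) (fun _ => tt) tt); first by rewrite /distr; apply: rsum_ext => w.
rewrite (@lift1 _ _ _ _ _ _ p p0 _ _ (fun _ => tt) (fun _ => tt) tt tt) //.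
Qed.

Lemma pp_XY z : distr (pp p) (fun w => (px w, py1 w, py2 w)) z = distr p (fun w => (px w, py1 w, py2 w)) z.
Proof. exact: (@lift1 _ _ _ _ _ _ p p0 _ _ (fun w => (px w, py1 w, py2 w)) (fun w => (px w, py1 w, py2 w)) z z). Qed.

Lemma pp_phi1 z : distr (pp p) phi1 z = distr p phi1 z.
Proof. exact: (@lift1 _ _ _ _ _ _ p p0 _ _ phi1 phi1 z z). Qed.

Lemma pp_phi2 z : distr (pp p) phi2 z = distr p phi2 z.
Proof.
case: z => [[[a c] x] y2].
rewrite (@lift2 _ _ _ _ _ _ p _ _ phi2 (fun w => ((pu12 w, px w), py2 w)) (((a, c), x), y2) ((a, x), y2) a c x).
- set Dp := distr p phi2 _.
  set Dq := distr p (fun w => ((pu12 w, px w), py2 w)) ((a, x), y2).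
  set r := distr p (ACX (U1:=U1) (U2:=U2) (U12:=U12) (TX:=TX) (TY1:=TY1) (TY2:=TY2)) ((a, c), x).
  set s := distr p (AX (U1:=U1) (U2:=U2) (U12:=U12) (TX:=TX) (TY1:=TY1) (TY2:=TY2)) (a, x).
  set PX := distr p (@px U1 U2 U12 TX TY1 TY2) x.
  set Dxy := distr p (fun w : O => (px w, py2 w)) (x, y2).
  have M1 : Dp * PX = r * Dxy :=
    @markov_comp _ p _ _ _ _ _ (fun w => (pu1 w, pu2 w, pu12 w)) (@px _ _ _ _ _ _)
      (fun w => (py1 w, py2 w)) (fun u => (u.2, u.1.2)) (fun y => y.2) pm (a, c) x y2.
  have M2 : Dq * PX = s * Dxy :=
    @markov_comp _ p _ _ _ _ _ (fun w => (pu1 w, pu2 w, pu12 w)) (@px _ _ _ _ _ _)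
      (fun w => (py1 w, py2 w)) (fun u => u.2) (fun y => y.2) pm a x y2.
  have hDp : 0 <= Dp by apply: distr_ge0.
  have hDq : 0 <= Dq by apply: distr_ge0.
  have hr : 0 <= r by apply: distr_ge0.
  have hs : 0 <= s by apply: distr_ge0.
  have hrs : r <= s.
    apply: distr_mono => // w; rewrite /ACX /AX !xpair_eqE.
    by case: (pu12 w == a); case: (pu2 w == c); case: (px w == x).
  have hpr : Dp <= r.
    apply: distr_mono => // w; rewrite /phi2 /ACX !xpair_eqE.
    by case: (pu12 w == a); case: (pu2 w == c); case: (px w == x); case: (py2 w == y2).
  have hPX : Dq <= PX.
    apply: distr_mono => // w; rewrite !xpair_eqE.
    by case: (pu12 w == a); case: (px w == x); case: (py2 w == y2).
  have hsPX : s <= PX.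
    apply: distr_mono => // w; rewrite /AX !xpair_eqE.
    by case: (pu12 w == a); case: (px w == x).
  case: (Rle_lt_or_eq_dec _ _ hs) => hs'; last first.
    have r0 : r = 0 by lra.
    have p0' : Dp = 0 by lra.
    rewrite r0 p0'; ring.
  rewrite /invg; destruct (Rlt_dec 0 s) as [hs2|hs2]; simpl; last lra.
  have hPX' : 0 < PX by lra.
  apply: (Rmult_eq_reg_r PX); last lra.
  rewrite M1.
  transitivity ((Dq * PX) * r * / s); first ring.
  rewrite M2; field; lra.
- move=> w1 w2; rewrite /phi2 /glue /= !xpair_eqE.
  by case: (pu12 w1 == a); case: (pu2 w2 == c); case: (px w1 == x); case: (py2 w1 == y2).
- move=> w1; rewrite !xpair_eqE => /andP [/andP [/eqP <- /eqP <-] _] //.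
Qed.


Lemma pp_markov : markov (pp p) (fun w => (pu1 w, pu2 w, pu12 w)) (@px _ _ _ _ _ _) (fun w => (py1 w, py2 w)).
Proof.
move=> [[b c] a] x [y1 y2].
rewrite (@lift2 _ _ _ _ _ _ p _ _ _ (fun w => (((pu1 w, pu12 w), px w), (py1 w, py2 w)))
   _ (((b, a), x), (y1, y2)) a c x); first last.
- move=> w1; rewrite !xpair_eqE => /andP [/andP [/andP [_ /eqP <-] /eqP <-] _] //.
- move=> w1 w2; rewrite /pairv /glue /= !xpair_eqE.
  by case: (pu1 w1 == b); case: (pu2 w2 == c); case: (pu12 w1 == a); case: (px w1 == x);
     case: (py1 w1 == y1); case: (py2 w1 == y2).
rewrite (@lift2 _ _ _ _ _ _ p _ _ (pairv (fun w => (pu1 w, pu2 w, pu12 w)) (@px _ _ _ _ _ _)) (fun w => ((pu1 w, pu12 w), px w))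
   (((b, c), a), x) ((b, a), x) a c x); first last.
- move=> w1; rewrite !xpair_eqE => /andP [/andP [_ /eqP <-] /eqP <-] //.
- move=> w1 w2; rewrite /pairv /glue /= !xpair_eqE.
  by case: (pu1 w1 == b); case: (pu2 w2 == c); case: (pu12 w1 == a); case: (px w1 == x).
rewrite (@lift1 _ _ _ _ _ _ p p0 _ _ (@px _ _ _ _ _ _) (@px _ _ _ _ _ _) x x) //.
rewrite (@lift1 _ _ _ _ _ _ p p0 _ _ (pairv (@px _ _ _ _ _ _) (fun w => (py1 w, py2 w))) (fun w => (px w, (py1 w, py2 w))) (x, (y1, y2)) (x, (y1, y2))) //.
have M : distr p (fun w => (((pu1 w, pu12 w), px w), (py1 w, py2 w))) (((b, a), x), (y1, y2)) * distr p (@px _ _ _ _ _ _) x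
   = distr p (fun w => ((pu1 w, pu12 w), px w)) ((b, a), x) * distr p (fun w => (px w, (py1 w, py2 w))) (x, (y1, y2)) :=
    @markov_comp _ p _ _ _ _ _ (fun w => (pu1 w, pu2 w, pu12 w)) (@px _ _ _ _ _ _)
      (fun w => (py1 w, py2 w)) (fun u => (u.1.1, u.2)) (fun y => y) pm (b, a) x (y1, y2).
set K := (_ * invg _).
transitivity ((distr p (fun w => (((pu1 w, pu12 w), px w), (py1 w, py2 w))) (((b, a), x), (y1, y2)) * distr p (@px _ _ _ _ _ _) x) * K); first ring.
rewrite M; ring.
Qed.

Definition BY (w : O) := (pu1 w, (py1 w, py2 w)).

Lemma pp_markov2 : markov (pp p) BY (@AX _ _ _ _ _ _) (@pu2 _ _ _ _ _ _).
Proof.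
move=> [b [y1 y2]] [a x] c.
rewrite (@lift2 _ _ _ _ _ _ p _ _ (pairv (pairv BY (@AX _ _ _ _ _ _)) (@pu2 _ _ _ _ _ _)) (pairv BY (@AX _ _ _ _ _ _))
   (((b, (y1, y2)), (a, x)), c) ((b, (y1, y2)), (a, x)) a c x); first last.
- move=> w1; rewrite /pairv !xpair_eqE => /andP [_ /andP [/eqP <- /eqP <-]] //.
- move=> w1 w2; rewrite /pairv /glue /BY /AX /= !xpair_eqE.
  by case: (pu1 w1 == b); case: (pu2 w2 == c); case: (pu12 w1 == a); case: (px w1 == x);
     case: (py1 w1 == y1); case: (py2 w1 == y2).
rewrite (@lift2 _ _ _ _ _ _ p _ _ (pairv (@AX _ _ _ _ _ _) (@pu2 _ _ _ _ _ _)) (@AX _ _ _ _ _ _) ((a, x), c) (a, x) a c x); first last.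
- by move=> w1 /eqP.
- move=> w1 w2; rewrite /pairv /glue /AX /= !xpair_eqE.
  by case: (pu2 w2 == c); case: (pu12 w1 == a); case: (px w1 == x).
rewrite (@lift1 _ _ _ _ _ _ p p0 _ _ (@AX _ _ _ _ _ _) (@AX _ _ _ _ _ _) (a, x) (a, x)) //.
rewrite (@lift1 _ _ _ _ _ _ p p0 _ _ (pairv BY (@AX _ _ _ _ _ _)) (pairv BY (@AX _ _ _ _ _ _)) ((b, (y1, y2)), (a, x)) ((b, (y1, y2)), (a, x))) //.
ring.
Qed.

Lemma ent_transfer (Z Y : finType) (phi : O -> Z) (k : Z -> Y) (F : O -> Y) :
  (forall z, distr (pp p) phi z = distr p phi z) -> (forall w, F w = k (phi w)) ->
  entropy (pp p) F = entropy p F.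
Proof.
move=> H1 H2.
have E : forall q : O -> R, forall y, distr q F y = distr q (fun w => k (phi w)) y.
  by move=> q y; apply: rsum_ext => w; rewrite H2.
rewrite /entropy; congr (- _); apply: rsum_ext => y; congr xlnx.
rewrite !E !distr_comp; apply: rsum_ext => z; by rewrite H1.
Qed.

Lemma exp_transfer (Z : finType) (phi : O -> Z) (k : Z -> R) (F : O -> R) :
  (forall z, distr (pp p) phi z = distr p phi z) -> (forall w, F w = k (phi w)) ->
  expect (pp p) F = expect p F.
Proof.
move=> H1 H2.
have E : forall q : O -> R, expect q F = rsum (fun z => distr q phi z * k z).
  by move=> q; rewrite CoV /expect; apply: rsum_ext => w; rewrite H2.
by rewrite !E; apply: rsum_ext => z; rewrite H1.
Qed.

End Facts.

Local Open Scope R_scope.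

Lemma o0s1 : (ord0 \in s1) = true. Proof. by rewrite /s1 inE. Qed.
Lemma o0s2 : (ord0 \in s2) = false. Proof. by rewrite /s2 inE. Qed.
Lemma o0s12 : (ord0 \in s12) = true. Proof. by rewrite /s12 inE. Qed.
Lemma omx1 : ((ord_max : 'I_2) \in s1) = false. Proof. by rewrite /s1 inE. Qed.
Lemma omx2 : ((ord_max : 'I_2) \in s2) = true. Proof. by rewrite /s2 inE. Qed.
Lemma omx12 : ((ord_max : 'I_2) \in s12) = true. Proof. by rewrite /s12 inE. Qed.

Lemma e12 : (s1 == s2) = false.
Proof. apply/eqP => h; have := o0s1; by rewrite h o0s2. Qed.
Lemma e21 : (s2 == s1) = false. Proof. by rewrite eq_sym e12. Qed.
Lemma e1_12 : (s1 == s12) = false.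
Proof. apply/eqP => h; have := omx1; by rewrite h omx12. Qed.
Lemma e12_1 : (s12 == s1) = false. Proof. by rewrite eq_sym e1_12. Qed.
Lemma e2_12 : (s2 == s12) = false.
Proof. apply/eqP => h; have := o0s2; by rewrite h o0s12. Qed.
Lemma e12_2 : (s12 == s2) = false. Proof. by rewrite eq_sym e2_12. Qed.

Definition setE := (o0s1, o0s2, o0s12, omx1, omx2, omx12, e12, e21, e1_12, e12_1, e2_12, e12_2, eqxx).

Lemma rsum_in3 (Dp : {set {set 'I_2}}) (F : {set 'I_2} -> R) :
  (forall S, S != s1 -> S != s2 -> S != s12 -> F S = 0) ->
  rsum_in Dp F = (if s1 \in Dp then F s1 else 0) + (if s2 \in Dp then F s2 else 0)
               + (if s12 \in Dp then F s12 else 0).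
Proof.
move=> H; rewrite /rsum_in big_mkcond /= (bigD1 s1) //= (bigD1 s2) //= ?setE //.
rewrite (bigD1 s12) //= ?setE //.
rewrite big1; first by case: (s1 \in Dp); case: (s2 \in Dp); case: (s12 \in Dp); ring.
move=> S /andP [/andP [n1 n2] n3]; case: (S \in Dp) => //; exact: H.
Qed.

Ltac occ F t := match F with context [t] => constr:(true) | _ => constr:(false) end.
Ltac mask_of F :=
  lazymatch F with
  | sel ?m => m
  | pairv ?f ?g => let m1 := mask_of f in let m2 := mask_of g in
      let m := eval compute in (orm m1 m2) in m
  | _ =>
    let a := occ F (@pu12) in let b := occ F (@pu1) in let c := occ F (@pu2) in
    let x := occ F (@px) in let y1 := occ F (@py1) in let y2 := occ F (@py2) in
    constr:((a, b, c, x, y1, y2))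
  end.

Arguments sel : simpl never.
Arguments entropy : simpl never.
Arguments distr : simpl never.

Ltac conv q :=
  repeat match goal with |- context [entropy q ?F] =>
    lazymatch F with
    | sel _ => fail
    | _ => let m := mask_of F in rewrite (@Inv _ q _ _ F (sel m)); last by inv_tac
    end end.


Tactic Notation "cmi" constr(q) constr(q0) constr(q1) constr(m1) constr(m2) constr(m3) :=
  let H := fresh "C" in
  have H := cmi_ge0 q0 q1 (sel m1) (sel m2) (sel m3); move: H; conv q; move=> H.

Local Close Scope R_scope.

Notation m0 := (false, false, false, false, false, false).
Notation mA := (true, false, false, false, false, false).
Notation mB := (false, true, false, false, false, false).
Notation mC := (false, false, true, false, false, false).
Notation mX := (false, false, false, true, false, false).
Notation m1 := (false, false, false, false, true, false).
Notation m2 := (false, false, false, false, false, true).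
Notation mAB := (true, true, false, false, false, false).
Notation mAC := (true, false, true, false, false, false).
Notation mABC := (true, true, true, false, false, false).
Notation mAX := (true, false, false, true, false, false).
Notation mABX := (true, true, false, true, false, false).
Notation mACX := (true, false, true, true, false, false).
Notation mX1 := (false, false, false, true, true, false).
Notation mX2 := (false, false, false, true, false, true).
Notation mA1 := (true, false, false, false, true, false).
Notation mA2 := (true, false, false, false, false, true).
Notation mAB1 := (true, true, false, false, true, false).
Notation mAC2 := (true, false, true, false, false, true).
Notation m12 := (false, false, false, false, true, true).

Theorem lemma1 (TX TY1 TY2 Xh1 Xh2 : finType) (P : TX * TY1 * TY2 -> R)
  (d1 : TX -> Xh1 -> R) (d2 : TX -> Xh2 -> R) (D : R * R) :
  pmf P ->
  forall t : R, RT_val P d1 d2 D t -> Rach_le P d1 d2 D t.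
Proof.
move=> _ t [U1 [U2 [U12 [p [[[p0 p1] [pmarg pmk]] [hd ht]]]]]].
pose q := pp p.
have q0 : forall w, (0 <= q w)%R := pp_ge0 p0.
have q1 : rsum q = 1%R := pp_sum1 p0 p1.
have T1 := pp_phi1 p0.
have T2 := pp_phi2 p0 pmk.
have Ht : t = (Rmax (cmutinfo q (@px _ _ _ _ _ _) (@pu12 _ _ _ _ _ _) (@py1 _ _ _ _ _ _))
             (cmutinfo q (@px _ _ _ _ _ _) (@pu12 _ _ _ _ _ _) (@py2 _ _ _ _ _ _))
        + cmutinfo q (@px _ _ _ _ _ _) (@pu1 _ _ _ _ _ _)
                   (pairv (@pu12 _ _ _ _ _ _) (@py1 _ _ _ _ _ _))
        + cmutinfo q (@px _ _ _ _ _ _) (@pu2 _ _ _ _ _ _)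
                   (pairv (@pu12 _ _ _ _ _ _) (@py2 _ _ _ _ _ _)))%R.
  rewrite ht /cmutinfo /centropy /q.
  rewrite (ent_transfer (k := fun z : U12 * U1 * TX * TY1 => (z.1.2, z.2)) (F := pairv (@px _ _ _ _ _ _) (@py1 _ _ _ _ _ _)) T1) //.
  rewrite (ent_transfer (k := fun z : U12 * U1 * TX * TY1 => z.2) (F := @py1 _ _ _ _ _ _) T1) //.
  rewrite (ent_transfer (k := fun z : U12 * U1 * TX * TY1 => (z.1.2, (z.1.1.1, z.2))) (F := pairv (@px _ _ _ _ _ _) (pairv (@pu12 _ _ _ _ _ _) (@py1 _ _ _ _ _ _))) T1) //.
  rewrite (ent_transfer (k := fun z : U12 * U1 * TX * TY1 => (z.1.1.1, z.2)) (F := pairv (@pu12 _ _ _ _ _ _) (@py1 _ _ _ _ _ _)) T1) //.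
  rewrite (ent_transfer (k := fun z : U12 * U1 * TX * TY1 => (z.1.2, (z.1.1.2, (z.1.1.1, z.2)))) (F := pairv (@px _ _ _ _ _ _) (pairv (@pu1 _ _ _ _ _ _) (pairv (@pu12 _ _ _ _ _ _) (@py1 _ _ _ _ _ _)))) T1) //.
  rewrite (ent_transfer (k := fun z : U12 * U1 * TX * TY1 => (z.1.1.2, (z.1.1.1, z.2))) (F := pairv (@pu1 _ _ _ _ _ _) (pairv (@pu12 _ _ _ _ _ _) (@py1 _ _ _ _ _ _))) T1) //.
  rewrite (ent_transfer (k := fun z : U12 * U2 * TX * TY2 => (z.1.2, z.2)) (F := pairv (@px _ _ _ _ _ _) (@py2 _ _ _ _ _ _)) T2) //.
  rewrite (ent_transfer (k := fun z : U12 * U2 * TX * TY2 => z.2) (F := @py2 _ _ _ _ _ _) T2) //.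
  rewrite (ent_transfer (k := fun z : U12 * U2 * TX * TY2 => (z.1.2, (z.1.1.1, z.2))) (F := pairv (@px _ _ _ _ _ _) (pairv (@pu12 _ _ _ _ _ _) (@py2 _ _ _ _ _ _))) T2) //.
  rewrite (ent_transfer (k := fun z : U12 * U2 * TX * TY2 => (z.1.1.1, z.2)) (F := pairv (@pu12 _ _ _ _ _ _) (@py2 _ _ _ _ _ _)) T2) //.
  rewrite (ent_transfer (k := fun z : U12 * U2 * TX * TY2 => (z.1.2, (z.1.1.2, (z.1.1.1, z.2)))) (F := pairv (@px _ _ _ _ _ _) (pairv (@pu2 _ _ _ _ _ _) (pairv (@pu12 _ _ _ _ _ _) (@py2 _ _ _ _ _ _)))) T2) //.
  rewrite (ent_transfer (k := fun z : U12 * U2 * TX * TY2 => (z.1.1.2, (z.1.1.1, z.2))) (F := pairv (@pu2 _ _ _ _ _ _) (pairv (@pu12 _ _ _ _ _ _) (@py2 _ _ _ _ _ _))) T2) //.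
Show.
have H0 : entropy q (sel m0) = 0%R := @entropy_const _ q q1 _ (None, None, None, None, None, None).
have E1 := markov_eq q0 (pp_markov p0 pmk); move: E1; conv q; move=> E1.
have E2 := markov_eq q0 (pp_markov2 p0); move: E2; rewrite /BY /AX; conv q; move=> E2.
cmi q q0 q1 mAB m1 mX.
cmi q q0 q1 mC m1 mABX.
cmi q q0 q1 mABC m2 mX1.
cmi q q0 q1 mA m1 mX.
cmi q q0 q1 mB m1 mAX.
cmi q q0 q1 mAC m2 mX.
cmi q q0 q1 mB m2 mACX.
cmi q q0 q1 mABC m1 mX2.
cmi q q0 q1 mA m2 mX.
cmi q q0 q1 mC m2 mAX.
cmi q q0 q1 mB mC mAX.
cmi q q0 q1 m12 mC mABX.
cmi q q0 q1 mX mA m1.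
cmi q q0 q1 mX mA m2.
cmi q q0 q1 mX mB mA1.
cmi q q0 q1 mX mC mA2.
cmi q q0 q1 mA mB m1.
cmi q q0 q1 mA mC m2.
cmi q q0 q1 mA m1 m0.
cmi q q0 q1 mA m2 m0.
cmi q q0 q1 mB mA1 m0.
cmi q q0 q1 mC mA2 m0.
move=> eps heps; exists t; split; last lra.
have r1 : forall F : 'I_1 -> R, rsum F = F ord0 by move=> F; rewrite /rsum big_ord1.
exists 1%N, (fun _ => 1%R), (fun _ => D), (fun _ => t).
rewrite !r1 /=; split; first by move=> _; lra.
split; first done. split; first ring. split; first ring. split; last ring.
move=> _.
exists U1, U2, U12, q.
split.
  split; first by split; [exact: q0 | exact: q1].
  split.
  - move=> x y1 y2; rewrite /q (pp_XY p0); exact: pmarg.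
  - exact: pp_markov p0 pmk.
split.
  case: hd => g1 [g2 [h1 h2]]; exists g1, g2; split.
  - rewrite /q (exp_transfer (k := fun z : U12 * U1 * TX * TY1 => d1 z.1.2 (g1 z.1.1.2 z.1.1.1 z.2))
                  (F := fun w => d1 (px w) (g1 (pu1 w) (pu12 w) (py1 w))) T1) //.
  - rewrite /q (exp_transfer (k := fun z : U12 * U2 * TX * TY2 => d2 z.1.2 (g2 z.1.1.2 z.1.1.1 z.2))
                  (F := fun w => d2 (px w) (g2 (pu2 w) (pu12 w) (py2 w))) T2) //.
pose IA1 := (entropy q (sel mA) + entropy q (sel m1) - entropy q (sel mA1))%R.
pose IA2 := (entropy q (sel mA) + entropy q (sel m2) - entropy q (sel mA2))%R.
pose Rp := fun S : {set 'I_2} => if S == s12 then Rmin IA1 IA2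
   else if S == s1 then (entropy q (sel mB) + entropy q (sel mA1) - entropy q (sel mAB1))%R
   else if S == s2 then (entropy q (sel mC) + entropy q (sel mA2) - entropy q (sel mAC2))%R
   else 0%R.
pose Rr := fun S : {set 'I_2} => if S == s12 then (entropy q (sel mX) + entropy q (sel mA) - entropy q (sel mAX) - Rmin IA1 IA2)%R
   else if S == s1 then (entropy q (sel mAX) + entropy q (sel mB) - entropy q (sel mABX) - Rp s1)%R
   else if S == s2 then (entropy q (sel mABX) + entropy q (sel mC) - entropy q (sel (true,true,true,true,false,false)) - Rp s2)%R
   else 0%R.
have hmin : (Rmin IA1 IA2 <= IA1 /\ Rmin IA1 IA2 <= IA2 /\ (Rmin IA1 IA2 = IA1 \/ Rmin IA1 IA2 = IA2))%R.
  rewrite /Rmin; destruct (Rle_dec IA1 IA2); lra.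
have hmax : (IA1 <= Rmax IA1 IA2 /\ IA2 <= Rmax IA1 IA2 /\ (Rmax IA1 IA2 = IA1 \/ Rmax IA1 IA2 = IA2))%R.
  rewrite /Rmax; destruct (Rle_dec IA1 IA2); lra.
exists [:: s12; s1; s2], Rr, Rp.
split.
  rewrite /perm_eq /= ?setE //.
move: hmin hmax; rewrite /IA1 /IA2 => hmin hmax.
split; last first.
  rewrite Ht /Rr /Rp ?setE /= /cmutinfo /centropy.
  conv q.
  rewrite /Rmax /Rmin /IA1 /IA2; repeat destruct (Rle_dec _ _); lra.
split.
  move=> S _; rewrite /Rr /Rp.
  case: (S == s12); last case: (S == s1); last case: (S == s2); rewrite ?setE /=;
    split; rewrite /Rmin /IA1 /IA2; repeat destruct (Rle_dec _ _); lra.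
split.
  move=> S; rewrite !inE => /or3P [] /eqP ->; rewrite /mutinfo /centropy /prevset /uvar /Rr /Rp !inE ?setE /= ?setE /=;
    conv q; rewrite ?H0; rewrite /Rmin /IA1 /IA2; repeat destruct (Rle_dec _ _); lra.
have hRp : forall S, S != s1 -> S != s2 -> S != s12 -> Rp S = 0%R.
  by move=> S /negbTE h1 /negbTE h2 /negbTE h3; rewrite /Rp h1 h2 h3.
have hU : forall S, S != s1 -> S != s2 -> S != s12 -> entropy q (uvar [set S]) = 0%R.
  move=> S h1 h2 h3; rewrite /uvar !inE ![_ == S]eq_sym (negbTE h1) (negbTE h2) (negbTE h3) /=.
  exact: (@entropy_const _ q q1 _ (None, None, None)).
split.
  move=> Dp _ hsub.
  have n2 : (s2 \in Dp) = false.
    apply/negbTE/negP => h; have := subsetP hsub _ h; by rewrite /Dl inE o0s2.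
  rewrite (rsum_in3 Dp hRp) (rsum_in3 Dp hU) n2 /centropy /uvar /Dl !inE ?setE n2 /=.
  case: (s1 \in Dp); case: (s12 \in Dp); rewrite /= ?setE /=; conv q; rewrite ?H0 /Rp ?setE /=;
    rewrite /Rmin /IA1 /IA2; repeat destruct (Rle_dec _ _); lra.
move=> Dp _ hsub.
have n1 : (s1 \in Dp) = false.
  apply/negbTE/negP => h; have := subsetP hsub _ h; by rewrite /Dl inE omx1.
rewrite (rsum_in3 Dp hRp) (rsum_in3 Dp hU) n1 /centropy /uvar /Dl !inE ?setE n1 /=.
case: (s2 \in Dp); case: (s12 \in Dp); rewrite /= ?setE /=; conv q; rewrite ?H0 /Rp ?setE /=;
  rewrite /Rmin /IA1 /IA2; repeat destruct (Rle_dec _ _); lra.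
Qed.
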